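(* Fix integers $n\ge m\ge 3$ and $d$ with $n+1\le\binom{d+m-2}{m-1}$, and let $s=\lfloor d/2\rfloor$. Let $h_{max}$ be the maximal $h$-vector of Perazzo algebras with these invariants. Then $h_{max}$ is unimodal if and only if both (1) $\gamma_{s-1}<\beta_{s-1}$, and (2) $\alpha_{s-1}+\gamma_{s-1}\le\alpha_s+\beta_s$.
   Context: $K$ algebraically closed of characteristic zero. A Perazzo form of degree $d$ is $F=X_0p_0+\dots+X_np_n+G\in K[X_0,\dots,X_n,U_1,\dots,U_m]_d$ with $p_i\in K[U_1,\dots,U_m]_{d-1}$ algebraically dependent but linearly independent, $G\in K[U_1,\dots,U_m]_d$; $A_F=R/\operatorname{Ann}_RF$ with $R$ the ring of differential operators. $\alpha_i=\binom{m+i-1}{m-1}$, $\beta_i=\binom{d+m-i-1}{m-1}$, $\gamma_i=(n+1)\binom{m+i-2}{m-1}$. The maximal $h$-vector $h_{max}=(h_0,\dots,h_d)$ is symmetric ($h_i=h_{d-i}$) with $h_i=\min\{\alpha_i+\beta_i,\alpha_i+\gamma_i\}$ for $0\le i\le s$. A vector $(h_0,\dots,h_d)$ is unimodal if $h_0\le\dots\le h_k\ge h_{k+1}\ge\dots\ge h_d$ for some $k$. *)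

(* Defs.v *)
From mathcomp Require Import all_boot.
Set Implicit Arguments. Unset Strict Implicit. Unset Printing Implicit Defensive.

(* Invariants of Perazzo forms in K[X_0..X_n, U_1..U_m]_d (all in nat). *)
Definition alpha (m i : nat) : nat := 'C(m + i - 1, m - 1).
Definition beta (m d i : nat) : nat := 'C(d + m - i - 1, m - 1).
Definition gamma (n m i : nat) : nat := (n + 1) * 'C(m + i - 2, m - 1).

Definition hlow (n m d i : nat) : nat :=
  minn (alpha m i + beta m d i) (alpha m i + gamma n m i).

Definition hmax (n m d i : nat) : nat :=
  if i <= d./2 then hlow n m d i else hlow n m d (d - i).

Definition unimodal (h : nat -> nat) (d : nat) : Prop :=
  exists2 k, k <= d &
    (forall i, i < k -> h i <= h i.+1) /\ (forall i, k <= i -> i < d -> h i.+1 <= h i).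

(* Main.v *)
Require Import Defs.
From mathcomp Require Import all_boot.
From mathcomp Require Import zify.

Lemma ltn_bin2l x y k : 0 < k -> k <= x -> x < y -> 'C(x, k) < 'C(y, k).
Proof.
case: k => // k _ kx xy.
apply: (@leq_trans 'C(x.+1, k.+1)); last exact: leq_bin2l.
rewrite binS -addn1 leq_add2l bin_gt0; lia.
Qed.

Lemma alpha_mono m i j : i <= j -> alpha m i <= alpha m j.
Proof. move=> ij; apply: leq_bin2l; lia. Qed.

Lemma gamma_mono n m i j : i <= j -> gamma n m i <= gamma n m j.
Proof. move=> ij; apply: leq_mul => //; apply: leq_bin2l; lia. Qed.

Lemma beta_anti m d i j : i <= j -> beta m d j <= beta m d i.
Proof. move=> ij; apply: leq_bin2l; lia. Qed.

Arguments alpha_mono m {i j}.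
Arguments gamma_mono n m {i j}.
Arguments beta_anti m d {i j}.

Lemma key m d t : 3 <= m -> t.*2.+2 <= d ->
  alpha m t.+1 + beta m d t.+1 < alpha m t + beta m d t.
Proof.
move=> m3 hd.
have [p ->] : exists p, m = p.+3 by exists (m - 3); lia.
rewrite /alpha /beta.
have -> : p.+3 + t.+1 - 1 = (p + t + 2).+1 by lia.
have -> : p.+3 + t - 1 = p + t + 2 by lia.
have -> : p.+3 - 1 = p.+2 by lia.
set y := d + p.+3 - t.+1 - 1.
have -> : d + p.+3 - t - 1 = y.+1 by rewrite /y; lia.
rewrite (binS (p + t + 2) p.+1) (binS y p.+1).
have : 'C(p + t + 2, p.+2) + 'C(p + t + 2, p.+1) + 'C(y, p.+2) <
       'C(p + t + 2, p.+2) + ('C(y, p.+2) + 'C(y, p.+1)).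
  rewrite -addnA ltn_add2l [X in _ < X]addnC ltn_add2r.
  apply: ltn_bin2l => //; rewrite /y; lia.
done.
Qed.

Lemma hlow_G n m d s j : j <= s - 1 -> gamma n m (s - 1) < beta m d (s - 1) ->
  hlow n m d j = alpha m j + gamma n m j.
Proof.
move=> js H; rewrite /hlow; apply/minn_idPr; rewrite leq_add2l.
apply: (leq_trans (gamma_mono n m js)); apply: (leq_trans (ltnW H)).
exact: beta_anti.
Qed.

Lemma core n m d s j : gamma n m (s - 1) < beta m d (s - 1) ->
  alpha m (s - 1) + gamma n m (s - 1) <= alpha m s + beta m d s ->
  j < s -> hlow n m d j <= hlow n m d j.+1.
Proof.
move=> H1 H2 js.
rewrite (@hlow_G n m d s j) //; last lia.
have [jl|je] := ltnP j.+1 s.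
  rewrite (@hlow_G n m d s j.+1) //; last lia.
  by apply: leq_add; [apply: alpha_mono|apply: gamma_mono].
have -> : j = s - 1 by lia.
have -> : (s - 1).+1 = s by lia.
rewrite /hlow leq_min H2 /=.
by apply: leq_add; [apply: alpha_mono|apply: gamma_mono]; lia.
Qed.

Lemma chain (h : nat -> nat) d k :
  (forall i, k <= i -> i < d -> h i.+1 <= h i) ->
  forall i j, k <= i -> i <= j -> j <= d -> h j <= h i.
Proof.
move=> H i; elim=> [|j IH] ki ij jd.
  by have -> : i = 0 by lia.
have [e|ne] := eqVneq i j.+1; first by rewrite e.
apply: (leq_trans (H j _ _)); try lia.
all: apply: IH; lia.
Qed.

Theorem theorem3p5 (n m d : nat) :
  3 <= m -> m <= n -> n + 1 <= 'C(d + m - 2, m - 1) ->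
  let s := d./2 in
  unimodal (hmax n m d) d <->
  (gamma n m (s - 1) < beta m d (s - 1) /\
   alpha m (s - 1) + gamma n m (s - 1) <= alpha m s + beta m d s).
Proof.
move=> m3 mn hb s.
have hd := odd_double_half d.
rewrite -addnn in hd.
have d2 : 2 <= d.
  rewrite leqNgt; apply/negP=> d1.
  have := @leq_bin2l (d + m - 2) (m - 1) (m - 1) ltac:(lia); rewrite binn; lia.
have s1 : 1 <= s by rewrite /s; lia.
have s2 : s + s <= d by rewrite /s; lia.
have hm : forall i, i <= s -> hmax n m d i = hlow n m d i.
  by move=> i ii; rewrite /hmax ii.
have hm2 : forall i, s < i -> hmax n m d i = hlow n m d (d - i).
  by move=> i si; rewrite /hmax leqNgt si.
split.
- case=> k kd [Hu Hd].
  have Hs : hlow n m d (s - 1) <= hlow n m d s.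
    rewrite -hm; last lia. rewrite -(hm s) //.
    have [sk|ks] := ltnP (s - 1) k.
      by have := Hu (s - 1) sk; have -> : (s - 1).+1 = s by lia.
    have -> : hmax n m d (s - 1) = hmax n m d (d - (s - 1)).
      rewrite (hm (s - 1)) ?(hm2 (d - (s - 1))); try lia; congr hlow; lia.
    apply: (@chain _ d k Hd); lia.
  have key'' : alpha m s + beta m d s < alpha m (s - 1) + beta m d (s - 1).
    have := @key m d (s - 1) m3 ltac:(lia).
    by have -> : (s - 1).+1 = s by lia.
  have H1 : gamma n m (s - 1) < beta m d (s - 1).
    rewrite ltnNge; apply/negP=> bg.
    move: Hs; rewrite {1}/hlow.
    have -> : minn (alpha m (s - 1) + beta m d (s - 1))
                 (alpha m (s - 1) + gamma n m (s - 1)) =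
              alpha m (s - 1) + beta m d (s - 1).
      by apply/minn_idPl; rewrite leq_add2l.
    move=> Hs; have := leq_trans Hs (geq_minl _ _); lia.
  split => //.
  by move: Hs; rewrite (@hlow_G n m d s (s-1)) // => Hs; apply: (leq_trans Hs (geq_minl _ _)).
- case=> H1 H2.
  exists s; first lia.
  split.
    move=> i ii; rewrite !hm; try lia.
    exact: (@core n m d s _ H1 H2).
  move=> i si id.
  have [js|js] := ltnP (d - i - 1) s.
    have E : hmax n m d i = hlow n m d (d - i - 1).+1.
      have [ei|ni] := eqVneq i s.
        rewrite ei hm //; congr hlow; lia.
      rewrite hm2; last lia. congr hlow; lia.
    rewrite E hm2; last lia.
    have -> : d - i.+1 = d - i - 1 by lia.
    exact: (@core n m d s _ H1 H2).
  have ei : i = s by lia.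
  rewrite ei hm2; last lia. rewrite hm //.
  have -> : d - s.+1 = s by lia.
  done.
Qed.
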